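(* Let $G=(V,E,s_0,s_1)$ be a switch graph and $o,d\in V$ with $o\neq d$. If $\textsc{Run}(G,o,d)$ does not terminate, then it reaches a dead end (i.e., at some point the current vertex $v$ of the run is a dead end).
   Context: A switch graph is a 4-tuple $G=(V,E,s_0,s_1)$ where $V$ is a finite vertex set, $s_0,s_1:V\to V$, and $E=\{(v,s_0(v)):v\in V\}\cup\{(v,s_1(v)):v\in V\}$ (loops allowed; possibly $s_0(v)=s_1(v)$). The procedure $\textsc{Run}(G,o,d)$: maintain arrays $\mathtt{s\_curr},\mathtt{s\_next}$ indexed by $V$, initially $\mathtt{s\_curr}[v]=s_0(v)$, $\mathtt{s\_next}[v]=s_1(v)$; set $v:=o$; while $v\neq d$: $w:=\mathtt{s\_curr}[v]$, swap $\mathtt{s\_curr}[v],\mathtt{s\_next}[v]$, $v:=w$ (traversing edge $(v,w)$). A dead end is a vertex from which there is no directed path to $d$ in the directed graph $(V,E)$. *)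

(* Defs.v *)
From mathcomp Require Import all_boot.
Set Implicit Arguments. Unset Strict Implicit. Unset Printing Implicit Defensive.

(* A switch graph G = (V, E, s0, s1) is given by a finite type V and the two
   successor functions s0 s1 : V -> V; E is determined by them. *)
Definition sw_edge (V : finType) (s0 s1 : V -> V) : rel V :=
  fun v w => (w == s0 v) || (w == s1 v).

Definition dead_end (V : finType) (s0 s1 : V -> V) (d v : V) : bool :=
  ~~ connect (sw_edge s0 s1) v d.

Record run_state (V : Type) := RunState {
  rs_pos : V;
  rs_curr : V -> V;
  rs_next : V -> V }.

(* One iteration of the while loop; a state at d is left unchanged
   (the loop has stopped). *)
Definition run_step (V : finType) (d : V) (st : run_state V) : run_state V :=
  let v := rs_pos st in
  if v == d then st else
  let w := rs_curr st v in
  RunState w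
    (fun u => if u == v then rs_next st u else rs_curr st u)
    (fun u => if u == v then rs_curr st u else rs_next st u).

Definition run_init (V : finType) (s0 s1 : V -> V) (o : V) : run_state V :=
  RunState o s0 s1.

Definition run_after (V : finType) (s0 s1 : V -> V) (o d : V) (n : nat)
  : run_state V := iter n (run_step d) (run_init s0 s1 o).

Definition run_terminates (V : finType) (s0 s1 : V -> V) (o d : V) : Prop :=
  exists n, rs_pos (run_after s0 s1 o d n) = d.

(* Main.v *)
From Stdlib Require Import Classical.
Require Import Defs.
From mathcomp Require Import all_boot.
From mathcomp Require Import zify.

Unset Implicit Arguments. Unset Strict Implicit. Unset Printing Implicit Defensive.

Section Pf.
Variables (V : finType) (s0 s1 : V -> V) (o d : V).
Let P n := rs_pos (run_after s0 s1 o d n).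
Let C n := rs_curr (run_after s0 s1 o d n).
Let N n := rs_next (run_after s0 s1 o d n).

Hypothesis nd : forall n, P n <> d.

Lemma stepE n : run_after s0 s1 o d n.+1 =
  RunState (C n (P n))
    (fun u => if u == P n then N n u else C n u)
    (fun u => if u == P n then C n u else N n u).
Proof.
rewrite /run_after iterS -/(run_after s0 s1 o d n) /run_step.
have := @nd n; rewrite /P => /eqP /negbTE -> //.
Qed.

Lemma PS n : P n.+1 = C n (P n).
Proof. by rewrite {1}/P stepE. Qed.
Lemma CS n u : C n.+1 u = if u == P n then N n u else C n u.
Proof. by rewrite {1}/C stepE. Qed.
Lemma NS n u : N n.+1 u = if u == P n then C n u else N n u.
Proof. by rewrite {1}/N stepE. Qed.

Lemma inv n u : (C n u = s0 u /\ N n u = s1 u) \/ (C n u = s1 u /\ N n u = s0 u).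
Proof.
elim: n => [|n IH]; first by left.
rewrite CS NS; case: (u == P n); last by [].
by case: IH => [[-> ->]|[-> ->]]; [right|left].
Qed.

Lemma frame a k v : (forall j, a <= j < a + k -> P j <> v) -> C (a + k) v = C a v.
Proof.
elim: k => [|k IH] H; first by rewrite addn0.
rewrite addnS CS.
have -> : (v == P (a + k)) = false.
  apply/negbTE/eqP => E; apply: (H (a + k)); [lia | by rewrite E].
apply: IH => j Hj; apply: H; lia.
Qed.

Definition inf v := forall M, exists n, M <= n /\ P n = v.

Lemma exists_inf : exists v, inf v.
Proof.
apply: NNPP => H.
have H2 : forall v, exists M, forall n, M <= n -> P n <> v.
  move=> v; apply: NNPP => Hn; apply: H; exists v => M.
  apply: NNPP => Hm; apply: Hn; exists M => n Hn E; apply: Hm; exists n; split => //.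
have H3 : forall l : seq V, exists M, forall v n, v \in l -> M <= n -> P n <> v.
  elim=> [|x l [M HM]]; first by exists 0.
  have [M' HM'] := H2 x.
  exists (maxn M M') => v n; rewrite inE => /orP [/eqP -> | Hl] Hn.
    apply: HM'; lia.
  apply: HM => //; lia.
have [M HM] := H3 (enum V).
by apply: (HM (P M) M) => //; rewrite mem_enum.
Qed.

Lemma inf_step v w : inf v -> sw_edge s0 s1 v w -> inf w.
Proof.
move=> Hv Hw M.
have [n1 [Hn1 E1]] := Hv M.
have ex : exists m, (n1 < m) && (P m == v).
  have [m [Hm Em]] := Hv n1.+1; exists m; apply/andP; split => //; exact/eqP.
case: (ex_minnP ex) => m /andP [Hm1 /eqP Em] Hmin.
have Cm : C m v = N n1 v.
  have -> : m = n1.+1 + (m - n1.+1) by lia.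
  rewrite frame; first by rewrite CS E1 eqxx.
  move=> j Hj Ej; have := Hmin j; rewrite Ej eqxx andbT.
  move=> /(_ ltac:(apply/ltP; lia)); lia.
have P1 : P n1.+1 = C n1 v by rewrite PS E1.
have P2 : P m.+1 = N n1 v by rewrite PS Em Cm.
move: Hw; rewrite /sw_edge => /orP [] /eqP ->;
  (case: (inv n1 v) => [[Hc Hn]|[Hc Hn]]);
  first [ exists n1.+1; split; [lia| by rewrite P1]
        | exists m.+1; split; [lia| by rewrite P2]].
Qed.

Lemma inf_path v p : inf v -> path (sw_edge s0 s1) v p -> inf (last v p).
Proof.
elim: p v => [|x p IH] v Hv //= /andP [He Hp].
apply: IH => //; exact: inf_step He.
Qed.

End Pf.

Theorem lemma3 (V : finType) (s0 s1 : V -> V) (o d : V) :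
  o <> d ->
  ~ run_terminates s0 s1 o d ->
  exists n, dead_end s0 s1 d (rs_pos (run_after s0 s1 o d n)).
Proof.
move=> _ Hnt.
have nd : forall n, rs_pos (run_after s0 s1 o d n) <> d.
  by move=> n E; apply: Hnt; exists n.
apply: NNPP => H.
have [v Hv] := @exists_inf V s0 s1 o d.
have [n [_ En]] := Hv 0.
have : connect (sw_edge s0 s1) v d.
  apply: NNPP => Hc; apply: H; exists n; rewrite /dead_end.
  by rewrite /= in En; rewrite En; apply/negP.
move=> /connectP [p Hp Hl].
have := @inf_path V s0 s1 o d nd _ _ Hv Hp; rewrite -Hl => Hd.
have [k [_ Ek]] := Hd 0.
exact: nd k Ek.
Qed.
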